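(* Let $\widehat{G}$ be a chordal signed separable bigraph. Suppose that a vertex set $S$ minimally separates components $\widehat{H_1}$ and $\widehat{H_2}$ of $\widehat G-S$. Then $\widehat{H_1}$ or $\widehat{H_2}$ contains an edge which is a signed simplicial edge of $\widehat{G}$.
   Context: A signed graph is a finite simple graph each of whose edges is assigned a sign, positive or negative. A signed bigraph is a signed graph whose underlying graph is bipartite. A bigraph is separable if it contains an induced $2K_2$. A signed graph is positive if all its edges are positive and non-trivial if it has at least one edge. In a bigraph with bipartition $(X,Y)$, a subgraph $H$ is a biclique if every vertex of $V(H)\cap X$ is adjacent to every vertex of $V(H)\cap Y$. For an edge $uv$, $N(uv)=(N(u)\cup N(v))\setminus\{u,v\}$; $uv$ is signed simplicial if $N(uv)$ induces a positive biclique. A signed bigraph $\widehat G$ is chordal if its edges can be ordered $e_1,\dots,e_m$ so that each $e_i$ is signed simplicial in $\widehat G-\{e_1,\dots,e_{i-1}\}$ (edges deleted, vertices kept). For a vertex set $S$ and two distinct non-trivial connected components $H,H'$ of $\widehat G-S$, $S$ minimally separates $H$ and $H'$ if every vertex of $S$ has a neighbour in $H$ and a neighbour in $H'$. *)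

(* Defs.v *)
From mathcomp Require Import all_boot.
Set Implicit Arguments. Unset Strict Implicit. Unset Printing Implicit Defensive.

(* A signed bigraph on a finite vertex type T is given by
   - adj : rel T, the (symmetric, irreflexive) adjacency relation,
   - pos : rel T, the sign: an edge xy is positive iff pos x y (symmetric),
   - X : {set T}, one side of the bipartition (X, ~: X). *)

Section SignedBigraph.
Variable T : finType.

Definition simple_graph (adj : rel T) : Prop :=
  (forall x y, adj x y = adj y x) /\ (forall x, ~~ adj x x).

Definition signed_bigraph (adj pos : rel T) (X : {set T}) : Prop :=
  simple_graph adj /\ (forall x y, pos x y = pos y x) /\
  (forall x y, adj x y -> (x \in X) != (y \in X)).

Definition del_edges (adj : rel T) (D : seq (T * T)) : rel T :=
  fun x y => adj x y && ~~ has (fun p => [set p.1; p.2] == [set x; y]) D.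

Definition nbhd_edge (adj : rel T) (u v : T) : {set T} :=
  [set w | (adj u w || adj v w) && (w != u) && (w != v)].

Definition induces_biclique (adj : rel T) (X : {set T}) (A : {set T}) : Prop :=
  forall x y, x \in A -> y \in A -> x \in X -> y \notin X -> adj x y.

Definition induces_positive (adj pos : rel T) (A : {set T}) : Prop :=
  forall x y, x \in A -> y \in A -> adj x y -> pos x y.

Definition signed_simplicial (adj pos : rel T) (X : {set T}) (u v : T) : Prop :=
  induces_biclique adj X (nbhd_edge adj u v) /\
  induces_positive adj pos (nbhd_edge adj u v).

Definition edge_ordering (adj : rel T) (s : seq (T * T)) : Prop :=
  all (fun p => adj p.1 p.2) s /\
  uniq (map (fun p => [set p.1; p.2]) s) /\
  (forall x y, adj x y -> [set x; y] \in map (fun p => [set p.1; p.2]) s).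

Definition chordal_signed (adj pos : rel T) (X : {set T}) : Prop :=
  exists s : seq (T * T), edge_ordering adj s /\
    forall i : 'I_(size s),
      signed_simplicial (del_edges adj (take i s)) pos X
        (tnth (in_tuple s) i).1 (tnth (in_tuple s) i).2.

(* contains an induced 2K_2 *)
Definition separable (adj : rel T) : Prop :=
  exists a b c d : T, [/\ adj a b, adj c d, uniq [:: a; b; c; d] &
    ~~ [|| adj a c, adj a d, adj b c | adj b d]].

Definition del_verts (adj : rel T) (S : {set T}) : rel T :=
  fun x y => [&& adj x y, x \notin S & y \notin S].

Definition component_of (adj : rel T) (S : {set T}) (C : {set T}) : Prop :=
  exists2 x, x \notin S &
    C = [set y | (y \notin S) && connect (del_verts adj S) x y].

Definition nontrivial (adj : rel T) (C : {set T}) : Prop :=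
  exists x y, [/\ x \in C, y \in C & adj x y].

Definition minimally_separates (adj : rel T) (S H1 H2 : {set T}) : Prop :=
  [/\ component_of adj S H1, component_of adj S H2, H1 != H2,
      nontrivial adj H1 /\ nontrivial adj H2 &
      forall s, s \in S ->
        (exists2 h, h \in H1 & adj s h) /\ (exists2 h, h \in H2 & adj s h)].

End SignedBigraph.

(* Main.v *)
Require Import Defs.
From mathcomp Require Import all_boot.

Set Implicit Arguments. Unset Strict Implicit. Unset Printing Implicit Defensive.

Section Helpers.
Variable T : finType.
Implicit Types (adj pos : rel T) (X S C Ha Hb : {set T}).

Lemma dv_sym adj S : simple_graph adj -> symmetric (del_verts adj S).
Proof.
move=> [asym _] a b; rewrite /del_verts asym; congr (_ && _); exact: andbC.
Qed.

Lemma comp_notS adj S C x : component_of adj S C -> x \in C -> x \notin S.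
Proof. by move=> [x0 _ ->]; rewrite inE => /andP[]. Qed.

Lemma comp_closed adj S C x y : component_of adj S C -> x \in C -> adj x y ->
  y \notin S -> y \in C.
Proof.
move=> [x0 _ ->]; rewrite !inE => /andP[xS cx] axy yS; rewrite yS /=.
by apply: connect_trans cx (connect1 _); rewrite /del_verts axy xS yS.
Qed.

Lemma comp_conn adj S C x y : simple_graph adj -> component_of adj S C ->
  x \in C -> y \in C -> connect (del_verts adj S) x y.
Proof.
move=> sg [x0 _ ->]; rewrite !inE => /andP[_ cx] /andP[_ cy].
have cs := sym_connect_sym (dv_sym S sg).
by apply: connect_trans cy; rewrite cs.
Qed.

Lemma comp_eq adj S (C1 C2 : {set T}) x : simple_graph adj -> component_of adj S C1 ->
  component_of adj S C2 -> x \in C1 -> x \in C2 -> C1 = C2.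
Proof.
move=> sg c1 c2 x1 x2.
have cs := sym_connect_sym (dv_sym S sg).
move: (c1) (c2) => [a _ E1] [b _ E2].
have ca : connect (del_verts adj S) a x by move: x1; rewrite E1 inE => /andP[].
have cb : connect (del_verts adj S) b x by move: x2; rewrite E2 inE => /andP[].
rewrite E1 E2; apply/setP => z; rewrite !inE; case: (z \notin S) => //=.
apply/idP/idP => h.
  apply: connect_trans cb _; apply: connect_trans h; by rewrite cs.
apply: connect_trans ca _; apply: connect_trans h; by rewrite cs.
Qed.

Lemma comp_nb adj S C x y u : simple_graph adj -> component_of adj S C ->
  x \in C -> y \in C -> adj x y -> u \in C -> exists2 w, w \in C & adj u w.
Proof.
move=> sg cC xC yC axy uC.
case: (eqVneq u x) => [->|ux]; first by exists y.
have /connectP [p pp lp] := comp_conn sg cC uC xC.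
case: p pp lp => [|w p] /=; first by move=> _ E; rewrite E eqxx in ux.
move=> /andP[duw _] _.
move: duw; rewrite /del_verts => /and3P[auw _ wS].
by exists w => //; apply: comp_closed cC uC auw wS.
Qed.

Lemma nbhd_sym adj u v : nbhd_edge adj u v = nbhd_edge adj v u.
Proof.
apply/setP => z; rewrite !inE orbC -!andbA; congr (_ && _); exact: andbC.
Qed.

Lemma simp_sym adj pos X u v : signed_simplicial adj pos X u v ->
  signed_simplicial adj pos X v u.
Proof. by rewrite /signed_simplicial nbhd_sym. Qed.

Lemma key adj pos (G' : rel T) X S Ha Hb u v :
  signed_bigraph adj pos X ->
  (forall x y, G' x y -> adj x y) ->
  (forall x y, [|| x \in Ha, x \in Hb, y \in Ha | y \in Hb] -> G' x y = adj x y) ->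
  (forall x, x \in Ha -> x \notin S) ->
  (forall x, x \in Hb -> x \notin S) ->
  (forall x, x \in Ha -> x \notin Hb) ->
  (forall x y, x \in Ha -> y \in Hb -> ~~ adj x y) ->
  (forall x y, x \in Ha -> adj x y -> y \notin S -> y \in Ha) ->
  (exists2 w, w \in Ha & adj u w) ->
  (forall z, z \in S -> exists2 h, h \in Hb & adj z h) ->
  u \in Ha -> adj u v -> signed_simplicial G' pos X u v ->
  v \in Ha /\ signed_simplicial adj pos X u v.
Proof.
move=> [[asym airr] [psym bip]] sub agr HaS HbS Hab sepab comp [w wa uw] full
  ua uv [bic posi].
have agu z : G' u z = adj u z by apply: agr; rewrite ua.
have vHa : v \in Ha.
  case: (boolP (v \in S)) => vS; last exact: comp _ _ ua uv vS.
  exfalso; have [h hb vh] := full v vS.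
  have wu : w != u by apply/eqP => E; move: uw; rewrite E (negbTE (airr u)).
  have wv : w != v by apply/eqP => E; move: (HaS w wa); rewrite E vS.
  have hu : h != u by apply/eqP => E; move: (Hab u ua); rewrite -E hb.
  have hv : h != v by apply/eqP => E; move: (HbS h hb); rewrite E vS.
  have wN : w \in nbhd_edge G' u v by rewrite inE agu uw wu wv.
  have agvh : G' v h = adj v h by apply: agr; rewrite hb !orbT.
  have hN : h \in nbhd_edge G' u v by rewrite inE agvh vh orbT hu hv.
  have [[wX hX] | [hX wX]] : (w \in X /\ h \notin X) \/ (h \in X /\ w \notin X).
    move: (bip _ _ uw) (bip _ _ vh) (bip _ _ uv).
    case: (u \in X); case: (w \in X); case: (v \in X); case: (h \in X) => //=;
      by auto.
    by move: (sepab _ _ wa hb); rewrite (sub _ _ (bic _ _ wN hN wX hX)).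
  by move: (sepab _ _ wa hb); rewrite asym (sub _ _ (bic _ _ hN wN hX wX)).
have agv z : G' v z = adj v z by apply: agr; rewrite vHa.
have NE : nbhd_edge adj u v = nbhd_edge G' u v.
  by apply/setP => z; rewrite !inE agu agv.
split => //; split; rewrite /induces_biclique /induces_positive NE.
  by move=> x y xN yN xX yX; apply: sub; apply: bic.
move=> x y xN yN axy; have := bip _ _ axy.
case xX: (x \in X) => /= yX.
  by apply: posi => //; apply: bic => //; rewrite xX.
have yX' : y \in X by move: yX; case: (y \in X).
by rewrite psym; apply: posi => //; apply: bic => //; rewrite xX.
Qed.

End Helpers.

Theorem lemma4p3 (T : finType) (adj pos : rel T) (X : {set T})
    (S H1 H2 : {set T}) :
  signed_bigraph adj pos X ->
  chordal_signed adj pos X ->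
  separable adj ->
  minimally_separates adj S H1 H2 ->
  (exists u v, [/\ u \in H1, v \in H1, adj u v & signed_simplicial adj pos X u v]) \/
  (exists u v, [/\ u \in H2, v \in H2, adj u v & signed_simplicial adj pos X u v]).
Proof.
move=> sb [s [[sall [suniq scov]] Hsimp]] _ [c1 c2 n12 [[x1 [y1 [x1C y1C a1]]] nt2] full].
have sg : simple_graph adj by case: sb.
have [asym airr] := sg.
set H := H1 :|: H2.
pose P := fun q : T * T => (q.1 \in H) || (q.2 \in H).
have hasP : has P s.
  have := scov _ _ a1; case/mapP => q qs E; apply/hasP; exists q => //.
  have : x1 \in [set q.1; q.2] by rewrite -E !inE eqxx.
  by rewrite /P /H !inE; case/orP => /eqP E1; rewrite -E1 x1C /= ?orbT.
have hk : find P s < size s by rewrite -has_find.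
have ntake : ~~ has P (take (find P s) s) by rewrite has_take // ltnn.
pose G' := del_edges adj (take (find P s) s).
have sub : forall x y, G' x y -> adj x y by move=> x y /andP[].
have agr : forall x y, [|| x \in H1, x \in H2, y \in H1 | y \in H2] ->
    G' x y = adj x y.
  move=> x y hxy; rewrite /G' /del_edges; case: (adj x y) => //=.
  apply/hasPn => q qt; apply/negP => /eqP E.
  have := hasPn ntake q qt; rewrite /P /H !inE => nP.
  have xin : x \in [set q.1; q.2] by rewrite E !inE eqxx.
  have yin : y \in [set q.1; q.2] by rewrite E !inE eqxx orbT.
  move: xin yin; rewrite !inE.
  by move: hxy => /or4P[] h /orP[] /eqP ex /orP[] /eqP ey; move: h;
    rewrite ?ex ?ey => h; move: nP; rewrite h /= ?orbT.
have := Hsimp (Ordinal hk); rewrite (tnth_nth (x1, y1)) /=.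
set q := nth (x1, y1) s (find P s).
have Pq : P q := nth_find (x1, y1) hasP.
have aq : adj q.1 q.2.
  by have := all_nthP (x1, y1) sall (find P s) hk.
move=> simq.
have disj12 : forall x, x \in H1 -> x \notin H2.
  move=> x xa; apply/negP => xb; move/negP: n12; apply; apply/eqP.
  exact: comp_eq sg c1 c2 xa xb.
have disj21 : forall x, x \in H2 -> x \notin H1.
  by move=> x xb; apply/negP => xa; move: (disj12 x xa); rewrite xb.
have sep12 : forall x y, x \in H1 -> y \in H2 -> ~~ adj x y.
  move=> x y xa yb; apply/negP => axy.
  by move: (disj21 y yb); rewrite (comp_closed c1 xa axy (comp_notS c2 yb)).
have sep21 : forall x y, x \in H2 -> y \in H1 -> ~~ adj x y.
  by move=> x y xa yb; rewrite asym; apply: sep12.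
have full1 : forall z, z \in S -> exists2 h, h \in H1 & adj z h.
  by move=> z zS; case: (full z zS).
have full2 : forall z, z \in S -> exists2 h, h \in H2 & adj z h.
  by move=> z zS; case: (full z zS).
have [x2 [y2 [x2C y2C a2]]] := nt2.
have agr2 : forall x y, [|| x \in H2, x \in H1, y \in H2 | y \in H1] ->
    G' x y = adj x y.
  move=> x y h; apply: agr; move: h.
  by case: (x \in H1); case: (x \in H2); case: (y \in H1); case: (y \in H2).
have K1 u v : u \in H1 -> adj u v -> signed_simplicial G' pos X u v ->
    v \in H1 /\ signed_simplicial adj pos X u v.
  move=> uC.
  apply: (key sb sub agr (fun x => @comp_notS T adj S H1 x c1) (fun x => @comp_notS T adj S H2 x c2)
    disj12 sep12 (fun x y => @comp_closed T adj S H1 x y c1) _ full2 uC).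
  exact: comp_nb sg c1 x1C y1C a1 uC.
have K2 u v : u \in H2 -> adj u v -> signed_simplicial G' pos X u v ->
    v \in H2 /\ signed_simplicial adj pos X u v.
  move=> uC.
  apply: (key sb sub agr2 (fun x => @comp_notS T adj S H2 x c2) (fun x => @comp_notS T adj S H1 x c1)
    disj21 sep21 (fun x y => @comp_closed T adj S H2 x y c2) _ full1 uC).
  exact: comp_nb sg c2 x2C y2C a2 uC.
have aq' : adj q.2 q.1 by rewrite asym.
move: Pq; rewrite /P /H !inE -!orbA => /or4P[] h.
- by have [v1 sq] := K1 _ _ h aq simq; left; exists q.1, q.2.
- by have [v1 sq] := K2 _ _ h aq simq; right; exists q.1, q.2.
- have [v1 sq] := K1 _ _ h aq' (simp_sym simq); left; exists q.1, q.2.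
  by split => //; apply: simp_sym.
- have [v1 sq] := K2 _ _ h aq' (simp_sym simq); right; exists q.1, q.2.
  by split => //; apply: simp_sym.
Qed.
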